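(* Let $G\in\mathcal{V}_{\sigma\ell\mathbb{G}}$, $(f_n)_{n\ge1}\subseteq G$ and $g\in G$. Then $g=\sup_{n\ge1}f_n$ if and only if $g=\bigvee_{n\ge1}^g f_n$ and $f_n\wedge g=f_n$ for every $n\ge1$.
   Context: $\mathcal{V}_{\sigma\ell\mathbb{G}}$ is the infinitary variety of algebras $(G,0,+,-,\vee,\wedge,\bigvee^-)$, $\bigvee^-$ of countably infinite arity with $\bigvee_{n\ge1}^g f_n:=\bigvee^-(g,f_1,f_2,\dots)$, satisfying the $\ell$-group axioms and (A1) $\bigvee_{n\ge1}^g f_n=\bigvee_{n\ge1}^g(f_n\wedge g)$; (A2) $\bigvee_{n\ge1}^g f_n=(f_1\wedge g)\vee\bigvee^-(g,f_2,f_3,\dots)$; (A3) $\bigvee_{n\ge1}^g(f_n\wedge h)\le h$ ($a\le b$ meaning $a\wedge b=a$). The supremum refers to the lattice order of $G$. *)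

(* Defs.v *)
(** The sequence argument s : nat -> G stands for (f_1, f_2, ...), i.e.
    s k = f_{k+1};  bvee g s = bigvee^-(g, f_1, f_2, ...) = \bigvee^g_{n>=1} f_n. *)
Record sigmaLGroup := {
  carrier :> Type;
  zero : carrier;
  add : carrier -> carrier -> carrier;
  opp : carrier -> carrier;
  join : carrier -> carrier -> carrier;
  meet : carrier -> carrier -> carrier;
  bvee : carrier -> (nat -> carrier) -> carrier;
  addA : forall x y z, add x (add y z) = add (add x y) z;
  add0l : forall x, add zero x = x;
  add0r : forall x, add x zero = x;
  addNl : forall x, add (opp x) x = zero;
  addNr : forall x, add x (opp x) = zero;
  joinA : forall x y z, join x (join y z) = join (join x y) z;
  meetA : forall x y z, meet x (meet y z) = meet (meet x y) z;
  joinC : forall x y, join x y = join y x;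
  meetC : forall x y, meet x y = meet y x;
  joinKmeet : forall x y, join x (meet x y) = x;
  meetKjoin : forall x y, meet x (join x y) = x;
  addDjoinl : forall x y z, add x (join y z) = join (add x y) (add x z);
  addDjoinr : forall x y z, add (join y z) x = join (add y x) (add z x);
  addDmeetl : forall x y z, add x (meet y z) = meet (add x y) (add x z);
  addDmeetr : forall x y z, add (meet y z) x = meet (add y x) (add z x);
  bveeA1 : forall g s, bvee g s = bvee g (fun k => meet (s k) g);
  bveeA2 : forall g s, bvee g s = join (meet (s 0) g) (bvee g (fun k => s (S k)));
  (* (A3): a <= b means a /\ b = a *)
  bveeA3 : forall g h s,
      meet (bvee g (fun k => meet (s k) h)) h = bvee g (fun k => meet (s k) h)
}.

Arguments zero {_}.
Arguments add {_}.
Arguments opp {_}.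
Arguments join {_}.
Arguments meet {_}.
Arguments bvee {_}.

Definition le {G : sigmaLGroup} (a b : G) : Prop := meet a b = a.

Definition is_sup {G : sigmaLGroup} (s : nat -> G) (g : G) : Prop :=
  (forall k, le (s k) g) /\ (forall u : G, (forall k, le (s k) u) -> le g u).

(* Main.v *)
Require Import Defs.
From Stdlib Require Import FunctionalExtensionality.

Section L.
Variable G : sigmaLGroup.

Lemma le_trans (a b c : G) : le a b -> le b c -> le a c.
Proof. unfold le; intros H1 H2. rewrite <- H1, <- meetA, H2. reflexivity. Qed.

Lemma le_antisym (a b : G) : le a b -> le b a -> a = b.
Proof. unfold le; intros H1 H2. rewrite <- H1, meetC. exact H2. Qed.

Lemma le_joinl (a b : G) : le a (join a b).
Proof. unfold le. apply meetKjoin. Qed.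

Lemma le_joinr (a b : G) : le b (join a b).
Proof. unfold le. rewrite joinC. apply meetKjoin. Qed.

Lemma le_bvee (g : G) k : forall s, le (meet (s k) g) (bvee g s).
Proof.
  induction k as [|k IH]; intros s.
  - rewrite (bveeA2 G g s). apply le_joinl.
  - apply le_trans with (bvee g (fun k => s (S k))).
    + apply (IH (fun k => s (S k))).
    + rewrite (bveeA2 G g s). apply le_joinr.
Qed.

Lemma bvee_le (g : G) s : le (bvee g s) g.
Proof. unfold le. rewrite (bveeA1 G g s). apply bveeA3. Qed.
End L.

(* f k stands for f_{k+1}, so "for every n >= 1" becomes "for every k : nat". *)
Theorem mainTheorem19 (G : sigmaLGroup) (f : nat -> G) (g : G) :
  is_sup f g <-> (g = bvee g f /\ forall k, meet (f k) g = f k).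
Proof.
  split.
  - intros [Hub Hl]. split; [|exact Hub].
    apply le_antisym.
    + apply Hl. intros k. pose proof (le_bvee G g k f) as H.
      rewrite (Hub k) in H. exact H.
    + apply bvee_le.
  - intros [Hg Hk]. split; [exact Hk|].
    intros u Hu.
    assert (E : (fun k => meet (f k) u) = f) by (apply functional_extensionality; exact Hu).
    unfold le. pose proof (bveeA3 G g u f) as H. rewrite E in H.
    rewrite <- Hg in H. exact H.
Qed.
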